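(* Let $A$ be a linear space with two multiplications $\cdot,\ast:A\otimes A\to A$ and two commuting bijective linear maps $\alpha,\beta:A\to A$ that are multiplicative with respect to both $\cdot$ and $\ast$, such that $(A,\cdot,\alpha,\beta)$ is a BiHom-commutative algebra. Then $(x\cdot\beta(y))\ast\alpha\beta(z)=(x\ast\beta(z))\cdot\alpha\beta(y)$ holds for all $x,y,z\in A$ if and only if $\alpha(x)\cdot(y\ast z)=(x\cdot y)\ast\beta(z)$ holds for all $x,y,z\in A$.
   Context: Work over a field. A BiHom-associative algebra is a 4-tuple $(A,\cdot,\alpha,\beta)$ with $\alpha,\beta:A\to A$ commuting linear maps, multiplicative for $\cdot$, and $\alpha(x)\cdot(y\cdot z)=(x\cdot y)\cdot\beta(z)$ for all $x,y,z$; it is BiHom-commutative if moreover $\beta(a)\cdot\alpha(b)=\beta(b)\cdot\alpha(a)$ for all $a,b$. *)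

(* Defs.v *)
From HB Require Import structures.
From mathcomp Require Import all_boot all_order all_algebra.
Set Implicit Arguments. Unset Strict Implicit. Unset Printing Implicit Defensive.
Import GRing.Theory.
Local Open Scope ring_scope.

(* A multiplication A ⊗ A -> A, represented as a bilinear map A -> A -> A. *)
Definition bilinear_mul (K : fieldType) (A : lmodType K) (m : A -> A -> A) :=
  (forall x, linear (m x)) /\ (forall y, linear (fun x => m x y)).

Definition multiplicative_for (A : Type) (m : A -> A -> A) (f : A -> A) :=
  forall x y, f (m x y) = m (f x) (f y).

(* (A, m, alpha, beta) is a BiHom-associative algebra (alpha, beta linear is
   assumed separately). *)
Definition BiHom_assoc (A : Type) (m : A -> A -> A) (alpha beta : A -> A) :=
  [/\ forall x, alpha (beta x) = beta (alpha x),
      multiplicative_for m alpha,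
      multiplicative_for m beta &
      forall x y z, m (alpha x) (m y z) = m (m x y) (beta z)].

Definition BiHom_comm_alg (A : Type) (m : A -> A -> A) (alpha beta : A -> A) :=
  BiHom_assoc m alpha beta /\
  forall a b, m (beta a) (alpha b) = m (beta b) (alpha a).

(* Main.v *)
Require Import Defs.
From HB Require Import structures.
From mathcomp Require Import all_boot all_order all_algebra.
Local Open Scope ring_scope.

Theorem lemma3p2 (K : fieldType) (A : lmodType K)
  (dot ast : A -> A -> A) (alpha beta : A -> A) :
  bilinear_mul dot -> bilinear_mul ast ->
  linear alpha -> linear beta ->
  bijective alpha -> bijective beta ->
  (forall x, alpha (beta x) = beta (alpha x)) ->
  multiplicative_for dot alpha -> multiplicative_for dot beta ->
  multiplicative_for ast alpha -> multiplicative_for ast beta ->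
  BiHom_comm_alg dot alpha beta ->
  (forall x y z, ast (dot x (beta y)) (alpha (beta z))
                 = dot (ast x (beta z)) (alpha (beta y)))
  <->
  (forall x y z, dot (alpha x) (ast y z) = ast (dot x y) (beta z)).
Proof.
move=> _ _ _ _ [ai aK Ka] [bi bK Kb] ab _ _ mA mB [_ cm].
have aib : forall x, beta (ai x) = ai (beta x).
  by move=> x; apply: (can_inj aK); rewrite Ka ab Ka.
have C1 : forall x y z, dot (ast x (beta z)) (alpha (beta y))
    = dot (beta (beta y)) (ast (alpha (bi x)) (alpha z)).
  move=> x y z; rewrite -{1}[x]Kb -mB cm mA //.
have C2 : forall x y, dot (ai (beta (beta y))) (alpha (bi x)) = dot x (beta y).
  by move=> x y; rewrite -aib cm Kb Ka.
split=> H.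
- move=> u v w.
  have -> : u = ai (beta (beta (bi (bi (alpha u))))) by rewrite !Kb aK.
  have -> : v = alpha (bi (beta (ai v))) by rewrite bK Ka.
  have -> : w = alpha (ai w) by rewrite Ka.
  rewrite Ka -C1 -H C2 ab //.
- move=> x y z; rewrite C1 -[beta (beta y)](Ka) H C2 ab //.
Qed.
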